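(* Let $L_0$ be a normal modal logic with $\mathbf{T}\subseteq L_0$. Suppose $L_0$ is complete with respect to a class $C$ of Kripke frames or general frames such that for every $\mathcal W\in C$ the frame $2\mathcal W$ is an $L_0$-frame. Then $L_0$ has the strong boxdot property: for every normal modal logic $L$, if $\mathrm{BD}(L)\subseteq L_0$ then $L\subseteq L_0$.
   Context: Modal formulas are built from propositional variables with Boolean connectives and a single modality $\Box$. A normal modal logic (nml) is a set of formulas containing all classical tautologies and $\Box(p\to q)\to(\Box p\to\Box q)$, and closed under modus ponens, necessitation and substitution. $\mathbf K$ is the smallest nml, and $\mathbf T=\mathbf K\oplus(\Box p\to p)$. The boxdot translation $\varphi\mapsto\varphi^{\boxdot}$ fixes propositional variables, commutes with Boolean connectives, and satisfies $(\Box\varphi)^{\boxdot}=\boxdot\varphi^{\boxdot}$, where $\boxdot\psi$ abbreviates $\psi\wedge\Box\psi$. For an nml $L$, let $\mathrm{BD}(L)=\{\varphi:\varphi^{\boxdot}\in L\}$. A general frame is a triple $\langle W,R,A\rangle$ where $R\subseteq W\times W$ and $A\subseteq\mathcal P(W)$ is closed under Boolean operations and under $\Box X=\{w:\forall v\,(wRv\Rightarrow v\in X)\}$. Models based on it are those in which every variable denotes a set in $A$. A formula is valid in the frame if it holds at every point of every model based on the frame. A Kripke frame $\langle W,R\rangle$ is identified with $\langle W,R,\mathcal P(W)\rangle$. A frame is an $L$-frame if all formulas of $L$ are valid in it. $L$ is complete with respect to $C$ if every $\varphi\notin L$ is invalid in some frame of $C$. For a Kripke frame $\mathcal W=\langle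 W,R\rangle$, the frame $2\mathcal W=\langle 2W,2R\rangle$ is defined by $2W=W\times\{0,1\}$ and $\langle w,a\rangle\,2R\,\langle v,b\rangle$ iff $wRv$. For a general frame $\langle W,R,A\rangle$, $2\mathcal W=\langle 2W,2R,2A\rangle$ with $2A=\{(X\times\{0\})\cup(Y\times\{1\}):X,Y\in A\}$. *)

(* Defs.v *)
From Stdlib Require Import Bool.

Inductive form : Type :=
| Var : nat -> form
| Bot : form
| Neg : form -> form
| And : form -> form -> form
| Or  : form -> form -> form
| Imp : form -> form -> form
| Box : form -> form.

Fixpoint peval (v : nat -> bool) (b : form -> bool) (f : form) : bool :=
  match f with
  | Var n => v n
  | Bot => false
  | Neg g => negb (peval v b g)
  | And g h => peval v b g && peval v b h
  | Or g h => peval v b g || peval v b h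
  | Imp g h => implb (peval v b g) (peval v b h)
  | Box g => b g
  end.

Definition tautology (f : form) : Prop :=
  forall (v : nat -> bool) (b : form -> bool), peval v b f = true.

Fixpoint subst (s : nat -> form) (f : form) : form :=
  match f with
  | Var n => s n
  | Bot => Bot
  | Neg g => Neg (subst s g)
  | And g h => And (subst s g) (subst s h)
  | Or g h => Or (subst s g) (subst s h)
  | Imp g h => Imp (subst s g) (subst s h)
  | Box g => Box (subst s g)
  end.

Definition p0 : form := Var 0.
Definition p1 : form := Var 1.

Definition logic := form -> Prop.

Definition incl (L1 L2 : logic) : Prop := forall f, L1 f -> L2 f.

Definition nml (L : logic) : Prop :=
  (forall f, tautology f -> L f) /\
  L (Imp (Box (Imp p0 p1)) (Imp (Box p0) (Box p1))) /\
  (forall f g, L (Imp f g) -> L f -> L g) /\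
  (forall f, L f -> L (Box f)) /\
  (forall s f, L f -> L (subst s f)).

Definition LogicT : logic :=
  fun f => forall L, nml L -> L (Imp (Box p0) p0) -> L f.

Fixpoint boxdot (f : form) : form :=
  match f with
  | Var n => Var n
  | Bot => Bot
  | Neg g => Neg (boxdot g)
  | And g h => And (boxdot g) (boxdot h)
  | Or g h => Or (boxdot g) (boxdot h)
  | Imp g h => Imp (boxdot g) (boxdot h)
  | Box g => And (boxdot g) (Box (boxdot g))
  end.

Definition BD (L : logic) : logic := fun f => L (boxdot f).

Record gframe : Type := GFrame {
  gW : Type;
  gR : gW -> gW -> Prop;
  gA : (gW -> Prop) -> Prop
}.

Definition boxset {W : Type} (R : W -> W -> Prop) (X : W -> Prop) : W -> Prop :=
  fun w => forall v, R w v -> X v.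

Definition is_gframe (F : gframe) : Prop :=
  (forall X Y, (forall w, X w <-> Y w) -> gA F X -> gA F Y) /\
  gA F (fun _ => False) /\
  (forall X, gA F X -> gA F (fun w => ~ X w)) /\
  (forall X Y, gA F X -> gA F Y -> gA F (fun w => X w /\ Y w)) /\
  (forall X Y, gA F X -> gA F Y -> gA F (fun w => X w \/ Y w)) /\
  (forall X, gA F X -> gA F (boxset (gR F) X)).

Definition kripke (W : Type) (R : W -> W -> Prop) : gframe :=
  GFrame W R (fun _ => True).

Fixpoint sat {W : Type} (R : W -> W -> Prop) (V : nat -> W -> Prop)
  (w : W) (f : form) : Prop :=
  match f with
  | Var n => V n w
  | Bot => False
  | Neg g => ~ sat R V w g
  | And g h => sat R V w g /\ sat R V w h
  | Or g h => sat R V w g \/ sat R V w h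
  | Imp g h => sat R V w g -> sat R V w h
  | Box g => forall v, R w v -> sat R V v g
  end.

Definition valid (F : gframe) (f : form) : Prop :=
  forall V : nat -> gW F -> Prop, (forall n, gA F (V n)) ->
  forall w, sat (gR F) V w f.

Definition is_L_frame (L : logic) (F : gframe) : Prop :=
  forall f, L f -> valid F f.

Definition complete_wrt (L : logic) (C : gframe -> Prop) : Prop :=
  forall f, ~ L f -> exists F, C F /\ ~ valid F f.

Definition double (F : gframe) : gframe :=
  GFrame (gW F * bool)
    (fun p q => gR F (fst p) (fst q))
    (fun Z => exists X Y, gA F X /\ gA F Y /\
       forall p, Z p <-> (if snd p then Y (fst p) else X (fst p))).

Definition strong_boxdot_property (L0 : logic) : Prop :=
  forall L, nml L -> incl (BD L) L0 -> incl L L0.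

(* Main.v *)
Require Import Defs.
From Stdlib Require Import Bool Classical.

Notation Iff a b := (And (Imp a b) (Imp b a)).
Definition qv : form := Var 0.
Definition Top : form := Imp Bot Bot.

Fixpoint u (f : form) : form :=
  match f with
  | Var n => Var (S n)
  | Bot => Bot
  | Neg g => Neg (u g)
  | And g h => And (u g) (u h)
  | Or g h => Or (u g) (u h)
  | Imp g h => Imp (u g) (u h)
  | Box g => And (Imp (Neg qv) (Box (Imp qv (u g))))
                 (Imp qv (Box (Imp (Neg qv) (u g))))
  end.

Fixpoint dl (f : form) : form :=
  match f with
  | Var _ => Top
  | Bot => Top
  | Neg g => dl g
  | And g h => And (dl g) (dl h)
  | Or g h => And (dl g) (dl h)
  | Imp g h => And (dl g) (dl h)
  | Box g => And (Iff (Box (Imp (Neg qv) (u g))) (Box (Imp qv (u g))))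
                 (Box (dl g))
  end.

Definition shift (f : form) : form := subst (fun n => Var (S n)) f.

Ltac taut :=
  unfold tautology; intros ?v ?b; unfold shift, qv in *; simpl;
  repeat match goal with
  | |- context [?bb ?x] =>
      match type of bb with
      | form -> bool => destruct (bb x)
      | nat -> bool => destruct (bb x)
      end
  end; reflexivity.

Section L.
Variable L : logic.
Hypothesis HL : nml L.

Lemma Ltaut f : tautology f -> L f.
Proof. apply HL. Qed.
Lemma Lmp f g : L (Imp f g) -> L f -> L g.
Proof. apply HL. Qed.
Lemma Lnec f : L f -> L (Box f).
Proof. apply HL. Qed.

Lemma Lt1 a b : tautology (Imp a b) -> L a -> L b.
Proof. intros T Ha. apply (Lmp a); auto. apply Ltaut; auto. Qed.
Lemma Lt2 a b c : tautology (Imp a (Imp b c)) -> L a -> L b -> L c.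
Proof. intros T Ha Hb. apply (Lmp b); auto. apply (Lmp a); auto. apply Ltaut; auto. Qed.

Lemma Lt5 a1 a2 a3 a4 a5 g :
  L a1 -> L a2 -> L a3 -> L a4 -> L a5 ->
  tautology (Imp a1 (Imp a2 (Imp a3 (Imp a4 (Imp a5 g))))) -> L g.
Proof.
  intros H1 H2 H3 H4 H5 T.
  apply (Lmp a5); auto. apply (Lmp a4); auto. apply (Lmp a3); auto.
  apply (Lmp a2); auto. apply (Lmp a1); auto. apply Ltaut; auto.
Qed.

Lemma Kax x y : L (Imp (Box (Imp x y)) (Imp (Box x) (Box y))).
Proof.
  destruct HL as [_ [HK [_ [_ Hs]]]].
  pose proof (Hs (fun n => match n with 0 => x | 1 => y | _ => Var n end) _ HK) as H.
  exact H.
Qed.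

Lemma BoxL A X Y : L (Imp A (Imp X Y)) -> L (Imp (Box A) (Imp (Box X) (Box Y))).
Proof.
  intros H.
  pose proof (Lmp _ _ (Kax A (Imp X Y)) (Lnec _ H)) as H1.
  pose proof (Kax X Y) as H2.
  eapply Lt2; [| exact H1 | exact H2]. taut.
Qed.

Lemma key f : L (Imp (boxdot (dl f)) (Iff (boxdot (u f)) (shift f))).
Proof.
  induction f; simpl.
  - apply Ltaut; taut.
  - apply Ltaut; taut.
  - eapply Lt1; [| exact IHf]. taut.
  - eapply Lt2; [| exact IHf1 | exact IHf2]. taut.
  - eapply Lt2; [| exact IHf1 | exact IHf2]. taut.
  - eapply Lt2; [| exact IHf1 | exact IHf2]. taut.
  - change (shift (Box f)) with (Box (shift f)). set (a := boxdot (u f)) in *. set (c := shift f) in *. set (d := boxdot (dl f)) in *. clearbody a c d.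
    assert (F1 : L (Imp (Box d) (Imp (Box (Imp qv a)) (Box (Imp qv c))))).
    { apply BoxL. eapply Lt1; [| exact IHf]. taut. }
    assert (F2 : L (Imp (Box d) (Imp (Box (Imp (Neg qv) a)) (Box (Imp (Neg qv) c))))).
    { apply BoxL. eapply Lt1; [| exact IHf]. taut. }
    assert (F3 : L (Imp (Box d) (Imp (Box c) (Box (Imp qv a))))).
    { apply BoxL. eapply Lt1; [| exact IHf]. taut. }
    assert (F4 : L (Imp (Box d) (Imp (Box c) (Box (Imp (Neg qv) a))))).
    { apply BoxL. eapply Lt1; [| exact IHf]. taut. }
    assert (F5 : L (Imp (Box (Imp qv c)) (Imp (Box (Imp (Neg qv) c)) (Box c)))).
    { apply BoxL. apply Ltaut. taut. }
    apply (Lt5 _ _ _ _ _ _ F1 F2 F3 F4 F5). taut.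
Qed.

End L.

Section Sem.
Variable F : gframe.
Variable V : nat -> gW F -> Prop.
Definition V2 : nat -> gW F * bool -> Prop :=
  fun n p => match n with 0 => snd p = true | S m => V m (fst p) end.

Lemma sem f : forall p,
  (sat (gR (double F)) V2 p (u f) <-> sat (gR F) V (fst p) f) /\
  sat (gR (double F)) V2 p (dl f).
Proof.
  induction f; intros p; simpl.
  - split; [tauto | intros H; exact H].
  - split; [tauto | intros H; exact H].
  - destruct (IHf p) as [A B]. split; [rewrite A; tauto | exact B].
  - destruct (IHf1 p) as [A B]; destruct (IHf2 p) as [C D].
    split; [rewrite A, C; tauto | tauto].
  - destruct (IHf1 p) as [A B]; destruct (IHf2 p) as [C D].
    split; [rewrite A, C; tauto | tauto].
  - destruct (IHf1 p) as [A B]; destruct (IHf2 p) as [C D].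
    split; [rewrite A, C; tauto | tauto].
  - assert (E1 : (forall v : gW F * bool, gR F (fst p) (fst v) ->
                  snd v = true -> sat (gR (double F)) V2 v (u f))
                 <-> forall y, gR F (fst p) y -> sat (gR F) V y f).
    { split.
      - intros H y Hy. apply (IHf (y, true)). apply (H (y, true)); auto.
      - intros H [y c] Hy _. apply (IHf (y, c)). apply H; auto. }
    assert (E2 : (forall v : gW F * bool, gR F (fst p) (fst v) ->
                  ~ snd v = true -> sat (gR (double F)) V2 v (u f))
                 <-> forall y, gR F (fst p) y -> sat (gR F) V y f).
    { split.
      - intros H y Hy. apply (IHf (y, false)). apply (H (y, false)); auto. discriminate.
      - intros H [y c] Hy _. apply (IHf (y, c)). apply H; auto. }
    split.
    + destruct p as [x [|]]; simpl in *.
      * split.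
        -- intros [_ H]. apply E2. apply H. reflexivity.
        -- intros H. split; [intros N; exfalso; apply N; reflexivity|].
           intros _. apply E2. exact H.
      * split.
        -- intros [H _]. apply E1. apply H. discriminate.
        -- intros H. split; [intros _; apply E1; exact H|].
           intros N; discriminate.
    + split; [split; intros H; [apply E1; apply E2; exact H | apply E2; apply E1; exact H]|].
      intros v _. apply IHf.
Qed.
End Sem.

Theorem mainTheorem1 (L0 : logic) (C : gframe -> Prop) :
  nml L0 -> incl LogicT L0 ->
  (forall F, C F -> is_gframe F) ->
  complete_wrt L0 C ->
  (forall F, C F -> is_L_frame L0 (double F)) ->
  strong_boxdot_property L0.
Proof.
  intros HL0 _ HCg Hcomp H2 L HL HBD th Hth.
  destruct (classic (L0 th)) as [h|Hn]; [exact h|]. exfalso.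
  destruct (Hcomp th Hn) as [F [CF Hinv]]. apply Hinv.
  intros V HV w.
  destruct (classic (sat (gR F) V w th)) as [h|h]; [exact h|]. exfalso.
  assert (Hpsi : L0 (Imp (dl th) (u th))).
  { apply HBD. unfold BD. simpl.
    assert (Hs : L (shift th)) by (apply HL; exact Hth).
    eapply Lt2; [exact HL| | exact (key L HL th) | exact Hs]. taut. }
  destruct (HCg F CF) as [Heq [H0 [Hc _]]].
  pose proof (H2 F CF _ Hpsi (V2 F V)) as Hv.
  assert (Hadm : forall n, gA (double F) (V2 F V n)).
  { intros [|m]; simpl.
    - exists (fun _ => False), (fun _ => ~ False). split; [exact H0|]. split; [apply Hc; exact H0|].
      intros [x [|]]; simpl; split; intros; auto; try discriminate; tauto.
    - exists (V m), (V m). split; [apply HV|]. split; [apply HV|].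
      intros [x [|]]; simpl; tauto. }
  specialize (Hv Hadm (w, false)). simpl in Hv.
  destruct (sem F V th (w, false)) as [A B].
  apply h. apply A. apply Hv. exact B.
Qed.
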